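(* Let $k\ge1$, $\alpha\in\mathbb Z$ with $(\alpha,k)=1$, and $p_1,p_2,p_3\in\mathbb Z$. Then $$A(p_1,p_2,p_3;\alpha;k)=k\sum_{f\mid(p_2,p_3,k)}f\,S\Big(p_1\overline{\alpha},\frac{p_2p_3}{f^2};\frac kf\Big),$$ where $\overline\alpha$ denotes an inverse of $\alpha$ modulo $k/f$.
   Context: $A(p_1,p_2,p_3;\alpha;k)=\sum_{x_1,x_2,x_3\bmod k}e\big(\frac{x_1x_2x_3\alpha-x_1p_1-x_2p_2-x_3p_3}{k}\big)$, $e(x)=e^{2\pi ix}$; $S(a,b;c)=\sum_{u\bmod c,(u,c)=1}e\big(\frac{au+b\bar u}{c}\big)$ is the Kloosterman sum; $(p_2,p_3,k)$ is the gcd (with $(0,0,k)=k$). *)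

(* Defs.v *)
From Stdlib Require Import Reals ZArith List.
Import ListNotations.
Open Scope R_scope.

(* complex numbers as (real part, imaginary part) *)
Definition C : Type := (R * R)%type.
Definition C0 : C := (0, 0).
Definition Cadd (z w : C) : C := (fst z + fst w, snd z + snd w).
Definition Cscale (r : R) (z : C) : C := (r * fst z, r * snd z).

Definition e (x : R) : C := (cos (2 * PI * x), sin (2 * PI * x)).

Definition Csum (l : list Z) (F : Z -> C) : C :=
  fold_right (fun x acc => Cadd (F x) acc) C0 l.

Definition residues (k : Z) : list Z := map Z.of_nat (seq 0 (Z.to_nat k)).

Definition A (p1 p2 p3 alpha k : Z) : C :=
  Csum (residues k) (fun x1 =>
  Csum (residues k) (fun x2 =>
  Csum (residues k) (fun x3 =>
    e (IZR (x1 * x2 * x3 * alpha - x1 * p1 - x2 * p2 - x3 * p3) / IZR k)))).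

(* an inverse of u modulo c (the least one in 0..c-1; 0 if none exists) *)
Definition invmod (u c : Z) : Z :=
  match find (fun v => Z.eqb ((u * v - 1) mod c) 0) (residues c) with
  | Some v => v
  | None => 0%Z
  end.

Definition S (a b c : Z) : C :=
  Csum (filter (fun u => Z.eqb (Z.gcd u c) 1) (residues c))
       (fun u => e (IZR (a * u + b * invmod u c) / IZR c)).

Definition pos_divisors (g : Z) : list Z :=
  filter (fun f => Z.eqb (g mod f) 0) (map Z.of_nat (seq 1 (Z.to_nat g))).

Definition gcd3 (a b c : Z) : Z := Z.gcd (Z.gcd a b) c.

(* Main.v *)
From Stdlib Require Import Reals ZArith List Lia Lra Permutation Znumtheory.
From Coquelicot Require Import Complex.
Require Import Defs.
Open Scope R_scope.
Lemma cring_aux (a b : Complex.C) : Cplus a (RtoC 0) = Cplus b (RtoC 0) -> a = b.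
Proof. rewrite !Cplus_0_r. auto. Qed.
Ltac cring := apply cring_aux; ring.

Lemma Cadd_plus (z w : Defs.C) : Cadd z w = Cplus z w.
Proof. reflexivity. Qed.
Lemma C0_RtoC : C0 = RtoC 0.
Proof. reflexivity. Qed.
Lemma Cscale_mult r z : Cscale r z = Cmult (RtoC r) z.
Proof. destruct z; unfold Cscale, Cmult, RtoC; cbn [fst snd]; f_equal; ring. Qed.

Lemma Csum_nil F : Csum nil F = RtoC 0. Proof. reflexivity. Qed.
Lemma Csum_cons x l F : Csum (x :: l) F = Cplus (F x) (Csum l F). Proof. reflexivity. Qed.

Lemma Csum_app l l' F : Csum (l ++ l') F = Cplus (Csum l F) (Csum l' F).
Proof. induction l. - cbn [app]. rewrite Csum_nil. cring. - rewrite <- app_comm_cons, !Csum_cons, IHl. cring. Qed.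

Lemma Csum_ext l F G : (forall x, In x l -> F x = G x) -> Csum l F = Csum l G.
Proof. induction l; intros H. reflexivity. rewrite !Csum_cons. rewrite H by (left; auto). rewrite IHl. reflexivity. intros; apply H; right; auto. Qed.

Lemma Csum_map' (g : Z -> Z) l F : Csum (map g l) F = Csum l (fun x => F (g x)).
Proof. induction l. reflexivity. cbn [map]. rewrite !Csum_cons, IHl. reflexivity. Qed.

Lemma Csum_flat_map (g : Z -> list Z) l F : Csum (flat_map g l) F = Csum l (fun x => Csum (g x) F).
Proof. induction l. reflexivity. cbn [flat_map]. rewrite Csum_app, IHl, Csum_cons. reflexivity. Qed.

Lemma Csum_filter (P : Z -> bool) l F : Csum (filter P l) F = Csum l (fun x => if P x then F x else C0).
Proof. induction l. reflexivity. cbn [filter]. rewrite Csum_cons. destruct (P a).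
  - rewrite Csum_cons, IHl. reflexivity.
  - rewrite IHl, C0_RtoC. cring. Qed.

Lemma Csum_perm l l' F : Permutation l l' -> Csum l F = Csum l' F.
Proof. induction 1.
  - reflexivity.
  - rewrite !Csum_cons, IHPermutation. reflexivity.
  - rewrite !Csum_cons. cring.
  - congruence. Qed.

Lemma Csum_mult_l z l F : Cmult z (Csum l F) = Csum l (fun x => Cmult z (F x)).
Proof. induction l. - rewrite !Csum_nil. cring. - rewrite !Csum_cons, <- IHl. cring. Qed.

Lemma Csum_zero l F : (forall x, In x l -> F x = RtoC 0) -> Csum l F = RtoC 0.
Proof. intros H. rewrite (Csum_ext l F (fun _ => RtoC 0)) by auto. clear H.
  induction l. reflexivity. rewrite Csum_cons, IHl. cring. Qed.

Lemma Csum_const l c : Csum l (fun _ => c) = Cmult (RtoC (INR (length l))) c.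
Proof. induction l; cbn [length]. - rewrite Csum_nil. change (INR 0) with 0. cring.
  - rewrite Csum_cons, IHl, S_INR. rewrite RtoC_plus. cring. Qed.

Lemma Csum_single l r0 G : NoDup l -> In r0 l ->
  Csum l (fun r => if Z.eqb r r0 then G r else C0) = G r0.
Proof. induction l; intros Hn Hi; [destruct Hi|]. inversion Hn; subst.
  rewrite Csum_cons. destruct Hi as [->|Hi].
  - rewrite Z.eqb_refl. rewrite Csum_zero. cring. intros x Hx. destruct (Z.eqb_spec x r0); subst; tauto.
  - rewrite IHl; auto. destruct (Z.eqb_spec a r0); subst; [tauto|]. rewrite C0_RtoC. cring. Qed.

Open Scope R_scope.

Lemma In_residues k x : In x (residues k) <-> (0 <= x < k)%Z.
Proof. unfold residues. rewrite in_map_iff. split.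
  - intros [n [<- Hn]]. apply in_seq in Hn. lia.
  - intros H. exists (Z.to_nat x). split. lia. apply in_seq. lia. Qed.

Lemma NoDup_residues k : NoDup (residues k).
Proof. unfold residues. apply NoDup_map_NoDup_ForallPairs. intros x y _ _ H. lia. apply seq_NoDup. Qed.

Lemma perm_map_self (g : Z -> Z) l : NoDup l -> (forall x, In x l -> In (g x) l) ->
  (forall x y, In x l -> In y l -> g x = g y -> x = y) -> Permutation (map g l) l.
Proof. intros Hn Hin Hinj. apply NoDup_Permutation_bis.
  - apply NoDup_map_NoDup_ForallPairs; [|exact Hn]. intros x y Hx Hy; apply Hinj; auto.
  - rewrite length_map; auto.
  - intros y Hy. apply in_map_iff in Hy. destruct Hy as [x [<- Hx]]. auto. Qed.

Lemma e_plus x y : e (x + y) = Cmult (e x) (e y).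
Proof. unfold e, Cmult. cbn [fst snd]. rewrite Rmult_plus_distr_l, cos_plus, sin_plus. f_equal; ring. Qed.

Lemma e_nat m : e (INR m) = RtoC 1.
Proof. unfold e, RtoC. pose proof (cos_period 0 m). pose proof (sin_period 0 m).
  rewrite cos_0 in H. rewrite sin_0 in H0.
  replace (2 * PI * INR m) with (0 + 2 * INR m * PI) by ring. rewrite H, H0. reflexivity. Qed.

Lemma e_int n : e (IZR n) = RtoC 1.
Proof. destruct (Z_le_gt_dec 0 n).
  - replace n with (Z.of_nat (Z.to_nat n)) by lia. rewrite <- INR_IZR_INZ. apply e_nat.
  - replace n with (- Z.of_nat (Z.to_nat (-n)))%Z by lia. rewrite opp_IZR, <- INR_IZR_INZ.
    pose proof (e_nat (Z.to_nat (-n))). unfold e, RtoC in *. injection H as H1 H2.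
    replace (2 * PI * - INR (Z.to_nat (- n))) with (- (2 * PI * INR (Z.to_nat (- n)))) by ring.
    rewrite cos_neg, sin_neg, H1, H2. f_equal. ring. Qed.

Lemma e_shift x n : e (x + IZR n) = e x.
Proof. rewrite e_plus, e_int. apply cring_aux. ring. Qed.

Definition E (n k : Z) : Defs.C := e (IZR n / IZR k).

Lemma E_mod n k : (0 < k)%Z -> E n k = E (n mod k) k.
Proof. intros Hk. unfold E. pose proof (Z_div_mod_eq_full n k).
  assert (IZR n / IZR k = IZR (n mod k) / IZR k + IZR (n / k)) as ->.
  { rewrite H at 1. rewrite plus_IZR, mult_IZR. field. apply not_0_IZR; lia. }
  apply e_shift. Qed.

Lemma E_congr a b k : (0 < k)%Z -> (a mod k = b mod k)%Z -> E a k = E b k.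
Proof. intros Hk H. rewrite (E_mod a), (E_mod b), H; auto. Qed.

Lemma E_add a b k : E (a + b) k = Cmult (E a k) (E b k).
Proof. unfold E. rewrite <- e_plus. f_equal. rewrite plus_IZR. unfold Rdiv. ring. Qed.

Lemma E_scale n k f : (0 < f)%Z -> (0 < k)%Z -> E (n * f) (k * f) = E n k.
Proof. intros Hf Hk. unfold E. f_equal. rewrite !mult_IZR. field. split; apply not_0_IZR; lia. Qed.

Lemma E_zero k : E 0 k = RtoC 1.
Proof. unfold E. replace (IZR 0 / IZR k) with (IZR 0) by (unfold Rdiv; ring). apply e_int. Qed.

Lemma cos_lt_1 x : 0 < x < 2 * PI -> cos x < 1.
Proof. intros [H1 H2]. pose proof PI_RGT_0. destruct (Rle_lt_dec x PI).
  - rewrite <- cos_0. apply cos_decreasing_1; lra.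
  - rewrite <- cos_2PI. apply cos_increasing_1; lra. Qed.

Lemma E_ne1 n k : (0 < k)%Z -> (n mod k <> 0)%Z -> E n k <> RtoC 1.
Proof. intros Hk Hn. rewrite E_mod by auto. pose proof (Z.mod_pos_bound n k Hk).
  unfold E, e, RtoC. intros Hc. injection Hc as H1 H2.
  assert (0 < IZR (n mod k) / IZR k < 1).
  { assert (0 < IZR k) by (apply IZR_lt; lia). split.
    - apply Rdiv_lt_0_compat; auto. apply IZR_lt; lia.
    - apply Rmult_lt_reg_r with (IZR k); auto. field_simplify; [|lra]. apply IZR_lt; lia. }
  pose proof PI_RGT_0.
  pose proof (cos_lt_1 (2 * PI * (IZR (n mod k) / IZR k))) as H4. lapply H4. lra. split; nra. Qed.

Lemma length_residues k : length (residues k) = Z.to_nat k.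
Proof. unfold residues. rewrite length_map, length_seq. auto. Qed.

Lemma orth k m : (0 < k)%Z ->
  Csum (residues k) (fun x => E (x * m) k) = if Z.eqb (m mod k) 0 then RtoC (IZR k) else RtoC 0.
Proof. intros Hk. destruct (Z.eqb_spec (m mod k) 0) as [Hm|Hm]; cbv iota.
  - rewrite (Csum_ext _ _ (fun _ => RtoC 1)).
    + rewrite Csum_const, length_residues, INR_IZR_INZ, Z2Nat.id by lia. apply cring_aux; ring.
    + intros x _. rewrite <- (E_zero k). apply E_congr; auto. rewrite Z.mul_mod, Hm by lia.
      rewrite Z.mul_0_r. reflexivity.
  - set (s := Csum (residues k) (fun x => E (x * m) k)).
    assert (Hs : Cmult (E m k) s = s).
    { unfold s. rewrite Csum_mult_l.
      assert (Hp : Permutation (map (fun x => (x + 1) mod k) (residues k)) (residues k)).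
      { apply perm_map_self. apply NoDup_residues.
        + intros x _. apply In_residues. apply Z.mod_pos_bound. lia.
        + intros x y Hx Hy H. apply In_residues in Hx, Hy.
          destruct (Z.eq_dec x (k-1)), (Z.eq_dec y (k-1)); subst; auto;
          rewrite ?Z.sub_add, ?Z.mod_same in H by lia; rewrite ?Z.mod_small in H by lia; lia. }
      rewrite <- (Csum_perm _ _ (fun x => E (x * m) k) Hp).
      rewrite Csum_map'. apply Csum_ext. intros x Hx. rewrite <- E_add.
      apply E_congr; auto. rewrite Z.mul_mod_idemp_l by lia. f_equal. ring. }
    pose proof (E_ne1 m k Hk Hm).
    assert (Hz : Cminus (E m k) (RtoC 1) <> RtoC 0).
    { intros Hc. apply H. replace (E m k) with (Cplus (Cminus (E m k) (RtoC 1)) (RtoC 1)) by (apply cring_aux; ring). rewrite Hc. apply cring_aux; ring. }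
    assert (Cmult (Cminus (E m k) (RtoC 1)) s = RtoC 0).
    { replace (Cmult (Cminus (E m k) (RtoC 1)) s) with (Cminus (Cmult (E m k) s) s) by ring.
      rewrite Hs. ring. }
    replace s with (Cmult (Cinv (Cminus (E m k) (RtoC 1))) (Cmult (Cminus (E m k) (RtoC 1)) s)).
    + rewrite H0. apply cring_aux; ring.
    + apply cring_aux. field. auto. Qed.

Open Scope Z_scope.

Lemma cong_iff a x y : a <> 0 -> (x mod a = y mod a <-> (a | x - y)).
Proof. intros Ha. split.
  - intros H. rewrite (Z_div_mod_eq_full x a), (Z_div_mod_eq_full y a), H. exists (x/a - y/a). ring.
  - intros [t Ht]. replace x with (y + t * a) by lia. apply Z.mod_add; auto. Qed.

Lemma unit_iff a x : 1 <= a -> (Z.gcd x a = 1 <-> exists y, (x * y) mod a = 1 mod a).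
Proof. intros Ha. split.
  - intros H. apply Z.gcd_bezout in H. destruct H as [s [t H]]. exists s.
    apply cong_iff. lia. exists (-t). lia.
  - intros [y H]. apply cong_iff in H; [|lia]. destruct H as [t Ht].
    apply Z.bezout_1_gcd. exists y, (-t). lia. Qed.

Lemma invmod_spec u c : 1 <= c -> Z.gcd u c = 1 -> (u * invmod u c) mod c = 1 mod c.
Proof. intros Hc Hg. unfold invmod.
  destruct (find (fun v => Z.eqb ((u * v - 1) mod c) 0) (residues c)) eqn:Hf.
  - apply find_some in Hf. destruct Hf as [_ H]. apply Z.eqb_eq in H.
    apply cong_iff. lia. apply Z.mod_divide; auto. lia.
  - exfalso. apply unit_iff in Hg; auto. destruct Hg as [y Hy].
    pose proof (find_none _ _ Hf (y mod c)) as H. rewrite In_residues in H.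
    assert (Hb := Z.mod_pos_bound y c ltac:(lia)). specialize (H Hb).
    apply Z.eqb_neq in H. apply H. apply Z.mod_divide. lia.
    apply cong_iff in Hy; [|lia]. destruct Hy as [t Ht].
    exists (t - u * (y / c)). rewrite Z.mod_eq by lia. lia. Qed.

Lemma NoDup_flat_map (g : Z -> list Z) l : NoDup l -> (forall x, In x l -> NoDup (g x)) ->
  (forall x y z, In x l -> In y l -> In z (g x) -> In z (g y) -> x = y) -> NoDup (flat_map g l).
Proof. induction l as [|a l IH]; intros Hn Hg Hd. constructor. inversion Hn; subst. cbn [flat_map].
  apply NoDup_app. apply Hg; left; auto. apply IH; auto. intros; apply Hg; right; auto.
  intros x y z Hx Hy; apply Hd; right; auto.
  intros z Hz Hz'. apply in_flat_map in Hz'. destruct Hz' as [y [Hy Hzy]].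
  assert (a = y) by (apply (Hd a y z); auto; [left|right]; auto). subst. tauto. Qed.

Lemma In_pd g f : In f (pos_divisors g) <-> 1 <= f <= g /\ g mod f = 0.
Proof. unfold pos_divisors. rewrite filter_In, in_map_iff, Z.eqb_eq. split.
  - intros [[n [<- Hn]] H]. apply in_seq in Hn. lia.
  - intros [H1 H2]. split; auto. exists (Z.to_nat f). split. lia. apply in_seq. lia. Qed.

Lemma NoDup_pd g : NoDup (pos_divisors g).
Proof. unfold pos_divisors. apply NoDup_filter. apply NoDup_map_NoDup_ForallPairs; [|apply seq_NoDup].
  intros x y _ _ H. lia. Qed.

Definition U (a : Z) := filter (fun u => Z.eqb (Z.gcd u a) 1) (residues a).

Lemma In_U a u : In u (U a) <-> 0 <= u < a /\ Z.gcd u a = 1.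
Proof. unfold U. rewrite filter_In, In_residues, Z.eqb_eq. tauto. Qed.

Lemma NoDup_U a : NoDup (U a).
Proof. apply NoDup_filter, NoDup_residues. Qed.

Lemma perm_divisors k : 1 <= k ->
  Permutation (flat_map (fun f => map (fun u => f * u) (U (k / f))) (pos_divisors k)) (residues k).
Proof. intros Hk. apply NoDup_Permutation.
  - apply NoDup_flat_map. apply NoDup_pd.
    + intros f Hf. apply In_pd in Hf. apply NoDup_map_NoDup_ForallPairs; [|apply NoDup_U].
      intros x y _ _ H. apply Z.mul_reg_l in H; lia.
    + intros f1 f2 z H1 H2 Hz1 Hz2. apply In_pd in H1, H2.
      apply in_map_iff in Hz1, Hz2. destruct Hz1 as [u1 [E1 Hu1]], Hz2 as [u2 [E2 Hu2]].
      apply In_U in Hu1, Hu2.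
      assert (forall f u, 1 <= f <= k -> k mod f = 0 -> Z.gcd u (k / f) = 1 -> Z.gcd (f * u) k = f) as Hg.
      { intros f u Hf Hkf Hu. assert (Hkk : k = f * (k / f)) by (pose proof (Z_div_mod_eq_full k f); lia).
        rewrite Hkk at 1.
        rewrite Z.gcd_mul_mono_l, Hu. lia. }
      rewrite <- (Hg f1 u1), <- (Hg f2 u2); try tauto. congruence.
  - apply NoDup_residues.
  - intros y. rewrite in_flat_map, In_residues. split.
    + intros [f [Hf Hy]]. apply In_pd in Hf. apply in_map_iff in Hy. destruct Hy as [u [<- Hu]].
      apply In_U in Hu. destruct Hf as [Hf1 Hf2]. pose proof (Z_div_mod_eq_full k f).
      assert (f*(u+1) <= f*(k/f)) by (apply Z.mul_le_mono_nonneg_l; lia). nia.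
    + intros Hy. set (f := Z.gcd y k).
      assert (Hf0 : 1 <= f). { assert (0 <= f) by apply Z.gcd_nonneg. assert (f <> 0). intro H0.
        apply Z.gcd_eq_0 in H0. lia. lia. }
      assert (Hfy : (f | y)) by apply Z.gcd_divide_l. assert (Hfk : (f | k)) by apply Z.gcd_divide_r.
      exists f. split.
      * apply In_pd. split. split; auto. apply Z.divide_pos_le; auto; lia. apply Z.mod_divide; auto; lia.
      * apply in_map_iff. exists (y / f). split.
        -- pose proof Hfy as [s Hs]. rewrite Hs at 2. rewrite Hs, Z.div_mul by lia. ring.
        -- apply In_U. split.
           ++ destruct Hfy as [s Hs], Hfk as [t Ht].
              rewrite Hs, Ht, !Z.div_mul by lia. nia.
           ++ apply Z.gcd_div_gcd; auto; lia. Qed.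

Lemma perm_split a f : 1 <= a -> 1 <= f ->
  Permutation (flat_map (fun r => map (fun j => r + a * j) (residues f)) (residues a)) (residues (a * f)).
Proof. intros Ha Hf. apply NoDup_Permutation.
  - apply NoDup_flat_map. apply NoDup_residues.
    + intros r _. apply NoDup_map_NoDup_ForallPairs; [|apply NoDup_residues].
      intros x y _ _ H. nia.
    + intros r1 r2 z H1 H2 Hz1 Hz2. apply In_residues in H1, H2.
      apply in_map_iff in Hz1, Hz2. destruct Hz1 as [j1 [E1 Hj1]], Hz2 as [j2 [E2 Hj2]].
      apply In_residues in Hj1, Hj2. subst z.
      assert (r1 = (r1 + a * j1) mod a). { rewrite (Z.mul_comm a), Z.mod_add, Z.mod_small; lia. }
      assert (r2 = (r2 + a * j2) mod a). { rewrite (Z.mul_comm a), Z.mod_add, Z.mod_small; lia. }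
      congruence.
  - apply NoDup_residues.
  - intros y. rewrite in_flat_map, In_residues. split.
    + intros [r [Hr Hy]]. apply In_residues in Hr. apply in_map_iff in Hy. destruct Hy as [j [<- Hj]].
      apply In_residues in Hj. nia.
    + intros Hy. exists (y mod a). split. apply In_residues, Z.mod_pos_bound; lia.
      apply in_map_iff. exists (y / a). split. rewrite (Z_div_mod_eq_full y a) at 3. ring.
      apply In_residues. split. apply Z.div_pos; lia. apply Z.div_lt_upper_bound; lia. Qed.

Lemma perm_pd k p2 p3 : 1 <= k ->
  Permutation (filter (fun f => andb (Z.eqb (p2 mod f) 0) (Z.eqb (p3 mod f) 0)) (pos_divisors k))
              (pos_divisors (gcd3 p2 p3 k)).
Proof. intros Hk. assert (Hg0 : 1 <= gcd3 p2 p3 k).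
  { unfold gcd3. assert (0 <= Z.gcd (Z.gcd p2 p3) k) by apply Z.gcd_nonneg.
    assert (Z.gcd (Z.gcd p2 p3) k <> 0). intro H0. apply Z.gcd_eq_0 in H0. lia. lia. }
  apply NoDup_Permutation. apply NoDup_filter, NoDup_pd. apply NoDup_pd.
  intros f. rewrite filter_In, !In_pd, Bool.andb_true_iff, !Z.eqb_eq. split.
  - intros [[Hf Hkf] [H2 H3]]. apply Z.mod_divide in Hkf, H2, H3; try lia.
    assert (Hd : (f | gcd3 p2 p3 k)). { unfold gcd3. apply Z.gcd_greatest; auto. apply Z.gcd_greatest; auto. }
    split. split. lia. apply Z.divide_pos_le; auto; lia. apply Z.mod_divide; auto; lia.
  - intros [Hf Hd]. apply Z.mod_divide in Hd; [|lia].
    assert (H1 : (f | Z.gcd p2 p3)) by (eapply Z.divide_trans; [apply Hd| apply Z.gcd_divide_l]).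
    assert (Hk' : (f | k)) by (eapply Z.divide_trans; [apply Hd| apply Z.gcd_divide_r]).
    assert (H2 : (f | p2)) by (eapply Z.divide_trans; [apply H1| apply Z.gcd_divide_l]).
    assert (H3 : (f | p3)) by (eapply Z.divide_trans; [apply H1| apply Z.gcd_divide_r]).
    split. split. split. lia. apply Z.divide_pos_le; auto; lia. apply Z.mod_divide; auto; lia.
    split; apply Z.mod_divide; auto; lia. Qed.

Lemma perm_units a al ab : 1 <= a -> (al * ab) mod a = 1 mod a ->
  Permutation (map (fun u => (- (al * u)) mod a) (U a)) (U a).
Proof. intros Ha Hab. apply perm_map_self. apply NoDup_U.
  - intros u Hu. apply In_U in Hu. apply In_U. split. apply Z.mod_pos_bound; lia.
    rewrite Z.gcd_mod_l. destruct Hu as [_ Hu]. apply unit_iff in Hu; auto. destruct Hu as [v Hv].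
    apply unit_iff; auto. exists (- (ab * v)). apply cong_iff in Hv, Hab; try lia. apply cong_iff; [lia|].
    destruct Hv as [s Hs], Hab as [t Ht].
    exists (s*al*ab + t).
    replace (- (al * u) * - (ab * v) - 1) with (al*ab*(u*v-1) + (al*ab-1)) by ring.
    rewrite Hs, Ht. ring.
  - intros x y Hx Hy H. apply In_U in Hx, Hy. apply cong_iff in H; [|lia].
    apply cong_iff in Hab; [|lia]. destruct H as [s Hs], Hab as [t Ht].
    assert (Hxy : (a | x - y)). { exists (- (s * ab) - t * (x - y)).
      replace (x - y) with (-(x-y)*(al*ab-1) - ab*(- (al * x) - - (al * y))) at 1 by ring.
      rewrite Hs, Ht. ring. }
    apply cong_iff in Hxy; [|lia]. rewrite !Z.mod_small in Hxy; lia. Qed.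

Open Scope Z_scope.

Lemma opp_mod0 p f : 1 <= f -> ((- p) mod f =? 0) = (p mod f =? 0).
Proof. intros Hf. destruct (Z.eqb_spec (p mod f) 0) as [H|H]; apply Z.eqb_eq || apply Z.eqb_neq.
  - apply Z.mod_divide in H; [|lia]. apply Z.mod_divide; [lia|]. apply Z.divide_opp_r; auto.
  - intro H'. apply H. apply Z.mod_divide in H'; [|lia]. apply Z.mod_divide; [lia|]. apply Z.divide_opp_r; auto. Qed.

Lemma stepC a f c u w p2 p3 : 1 <= a -> 1 <= f -> (c * u * w) mod a = 1 mod a ->
  Csum (residues (a * f)) (fun x2 => if Z.eqb (((c * (f * u)) * x2 - p3) mod (a * f)) 0
                                     then E (- (x2 * p2)) (a * f) else C0)
  = if andb (Z.eqb (p2 mod f) 0) (Z.eqb (p3 mod f) 0)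
    then Cmult (RtoC (IZR f)) (E (- ((p2 / f) * (p3 / f) * w)) a) else C0.
Proof. intros Ha Hf Hw.
  rewrite <- (Csum_perm _ _ _ (perm_split a f Ha Hf)). rewrite Csum_flat_map.
  rewrite (Csum_ext (residues a) _ (fun r => if Z.eqb ((c * f * u * r - p3) mod (a * f)) 0
      then Cmult (E (- (r * p2)) (a * f)) (if Z.eqb (p2 mod f) 0 then RtoC (IZR f) else RtoC 0) else C0)).
  2:{ intros r Hr. rewrite Csum_map'.
      rewrite (Csum_ext _ _ (fun j => if Z.eqb ((c * f * u * r - p3) mod (a * f)) 0
                                      then E (- ((r + a * j) * p2)) (a * f) else C0)).
      2:{ intros j _. replace ((c * (f * u)) * (r + a * j) - p3) with ((c * f * u * r - p3) + (c * u * j) * (a * f)) by ring.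
          rewrite Z.mod_add by lia. reflexivity. }
      destruct (Z.eqb ((c * f * u * r - p3) mod (a * f)) 0).
      - rewrite <- opp_mod0 by auto. rewrite <- orth by lia. rewrite Csum_mult_l. apply Csum_ext.
        intros j _. replace (- ((r + a * j) * p2)) with (- (r * p2) + (j * - p2) * a) by ring.
        rewrite E_add. rewrite (Z.mul_comm a f) at 2. rewrite E_scale by lia. reflexivity.
      - apply Csum_zero. reflexivity. }
  destruct (Z.eqb_spec (p2 mod f) 0) as [H2|H2]; cbn [andb].
  2:{ apply Csum_zero. intros r _. destruct (_ =? 0); [|reflexivity]. apply cring_aux. ring. }
  destruct (Z.eqb_spec (p3 mod f) 0) as [H3|H3].
  2:{ apply Csum_zero. intros r _. destruct (Z.eqb_spec ((c * f * u * r - p3) mod (a * f)) 0) as [H|H]; [|reflexivity].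
      exfalso. apply H3. apply Z.mod_divide in H; [|lia]. apply Z.mod_divide; [lia|].
      destruct H as [t Ht]. exists (c * u * r - t * a). lia. }
  apply Z.mod_divide in H2, H3; try lia. destruct H2 as [q2 Hq2], H3 as [q3 Hq3].
  subst p2 p3. rewrite !Z.div_mul by lia.
  set (r0 := (q3 * w) mod a).
  assert (Hr0 : In r0 (residues a)) by (apply In_residues, Z.mod_pos_bound; lia).
  rewrite (Csum_ext _ _ (fun r => if Z.eqb r r0 then Cmult (E (- (r * (q2 * f))) (a * f)) (RtoC (IZR f)) else C0)).
  - rewrite Csum_single by (auto using NoDup_residues).
    replace (- (r0 * (q2 * f))) with ((- (r0 * q2)) * f) by ring. rewrite E_scale by lia.
    assert (Hc : (- (r0 * q2)) mod a = (- (q2 * q3 * w)) mod a).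
    { apply cong_iff; [lia|]. exists (q2 * ((q3 * w) / a)). unfold r0. rewrite Z.mod_eq by lia. ring. }
    rewrite (E_congr _ _ a ltac:(lia) Hc).
    apply cring_aux. ring.
  - intros r Hr. apply In_residues in Hr.
    assert (Hiff : (c * f * u * r - q3 * f) mod (a * f) = 0 <-> r = r0).
    { rewrite Z.mod_divide by lia. split.
      - intros [t Ht]. assert (Ht' : c * u * r - q3 = t * a) by nia.
        apply cong_iff in Hw; [|lia]. destruct Hw as [s Hs].
        unfold r0. rewrite <- (Z.mod_small r a) at 1 by lia. apply cong_iff; [lia|].
        exists (- r * s + t * w).
        replace (r - q3 * w) with (- r * (c * u * w - 1) + (c * u * r - q3) * w) by ring.
        rewrite Hs, Ht'. ring.
      - intros ->. apply cong_iff in Hw; [|lia]. destruct Hw as [s Hs].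
        exists (c * u * (- ((q3 * w) / a)) + q3 * s).
        unfold r0. rewrite Z.mod_eq by lia.
        replace (c * f * u * (q3 * w - a * (q3 * w / a)) - q3 * f) with
                (f * (q3 * (c * u * w - 1)) - c * f * u * a * (q3 * w / a)) by ring.
        rewrite Hs. ring. }
    destruct (Z.eqb_spec ((c * f * u * r - q3 * f) mod (a * f)) 0) as [H|H];
    destruct (Z.eqb_spec r r0) as [H'|H']; try tauto; reflexivity. Qed.

Open Scope Z_scope.

Lemma unit_mul a x y : Z.gcd x a = 1 -> Z.gcd y a = 1 -> Z.gcd (x * y) a = 1.
Proof. intros Hx Hy. rewrite Z.gcd_comm in *. apply Zgcd_1_rel_prime. apply rel_prime_mult; apply Zgcd_1_rel_prime; auto. Qed.

Lemma stepE a al ab p1 P : 1 <= a -> (al * ab) mod a = 1 mod a ->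
  Csum (U a) (fun u => Cmult (E (- (u * p1)) a) (E (- (P * invmod (al * u) a)) a)) = S (p1 * ab) P a.
Proof. intros Ha Hab. unfold S. change (filter (fun u => Z.eqb (Z.gcd u a) 1) (residues a)) with (U a).
  assert (Hal : Z.gcd al a = 1) by (apply unit_iff; eauto).
  rewrite <- (Csum_perm _ _ (fun u => e (IZR (p1 * ab * u + P * invmod u a) / IZR a)) (perm_units a al ab Ha Hab)).
  rewrite Csum_map'. apply Csum_ext. intros u Hu. apply In_U in Hu. destruct Hu as [Hu0 Hu].
  set (v := (- (al * u)) mod a). set (w := invmod (al * u) a). set (iv := invmod v a).
  assert (Hw : (al * u * w) mod a = 1 mod a) by (apply invmod_spec; auto using unit_mul).
  assert (Hv : Z.gcd v a = 1) by (unfold v; rewrite Z.gcd_mod_l, Z.gcd_opp_l; auto using unit_mul).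
  assert (Hiv : (v * iv) mod a = 1 mod a) by (apply invmod_spec; auto).
  rewrite <- E_add. change (e (IZR (p1 * ab * v + P * iv) / IZR a)) with (E (p1 * ab * v + P * iv) a).
  apply E_congr; [lia|]. apply cong_iff; [lia|].
  apply cong_iff in Hab, Hw, Hiv; try lia.
  assert (D1 : (a | v + al * u)). { exists (- ((- (al * u)) / a)). unfold v. rewrite Z.mod_eq by lia. ring. }
  replace (- (u * p1) + - (P * w) - (p1 * ab * v + P * iv)) with
    ((v + al * u) * (- p1 * ab - P * iv * w) + (v * iv - 1) * (P * w) + (al * u * w - 1) * (P * iv)
      + (al * ab - 1) * (p1 * u)) by ring.
  repeat apply Z.divide_add_r; apply Z.divide_mul_l; auto. Qed.

Open Scope Z_scope.

Lemma main_aux (k alpha p1 p2 p3 : Z) (abar : Z -> Z) :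
  (1 <= k)%Z ->
  Z.gcd alpha k = 1%Z ->
  (forall f : Z, (0 < f)%Z -> (f | gcd3 p2 p3 k)%Z ->
     ((alpha * abar f) mod (k / f) = 1 mod (k / f))%Z) ->
  A p1 p2 p3 alpha k =
  Cscale (IZR k)
    (Csum (pos_divisors (gcd3 p2 p3 k))
       (fun f => Cscale (IZR f) (S (p1 * abar f) (p2 * p3 / (f * f)) (k / f)))).
Proof. intros Hk Hal Habar.
  assert (H1 : A p1 p2 p3 alpha k = Cmult (RtoC (IZR k)) (Csum (residues k) (fun x1 =>
      Cmult (E (- (x1 * p1)) k) (Csum (residues k) (fun x2 =>
        if Z.eqb (((alpha * x1) * x2 - p3) mod k) 0 then E (- (x2 * p2)) k else C0))))).
  { rewrite Csum_mult_l. unfold A. apply Csum_ext. intros x1 _. rewrite Csum_mult_l, Csum_mult_l.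
    apply Csum_ext. intros x2 _.
    rewrite (Csum_ext _ _ (fun x3 => Cmult (E (- (x1 * p1) + - (x2 * p2)) k) (E (x3 * (alpha * x1 * x2 - p3)) k))).
    2: { intros x3 _. rewrite <- E_add. unfold E.
         replace (x1 * x2 * x3 * alpha - x1 * p1 - x2 * p2 - x3 * p3) with
           (- (x1 * p1) + - (x2 * p2) + x3 * (alpha * x1 * x2 - p3)) by ring. reflexivity. }
    rewrite <- Csum_mult_l, orth by lia. rewrite E_add. destruct (_ =? 0); rewrite ?C0_RtoC. all: apply cring_aux; ring. }
  rewrite H1, Cscale_mult. f_equal.
  rewrite <- (Csum_perm _ _ _ (perm_divisors k Hk)). rewrite Csum_flat_map.
  rewrite <- (Csum_perm _ _ _ (perm_pd k p2 p3 Hk)), Csum_filter.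
  apply Csum_ext. intros f Hf. apply In_pd in Hf. destruct Hf as [Hf1 Hfk].
  set (a := k / f).
  assert (Hka : k = a * f) by (unfold a; pose proof (Z_div_mod_eq_full k f); lia).
  assert (Ha : 1 <= a) by nia.
  assert (Hala : Z.gcd alpha a = 1).
  { apply unit_iff in Hal; [|lia]. destruct Hal as [y Hy]. apply unit_iff; auto. exists y.
    apply cong_iff in Hy; [|lia]. apply cong_iff; [lia|]. destruct Hy as [t Ht]. exists (t * f). lia. }
  rewrite Csum_map'.
  rewrite (Csum_ext _ _ (fun u => Cmult (E (- (u * p1)) a)
     (if andb (Z.eqb (p2 mod f) 0) (Z.eqb (p3 mod f) 0)
      then Cmult (RtoC (IZR f)) (E (- ((p2 / f) * (p3 / f) * invmod (alpha * u) a)) a) else C0))).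
  2: { intros u Hu. apply In_U in Hu. rewrite Hka.
       rewrite (stepC a f alpha u (invmod (alpha * u) a) p2 p3 Ha ltac:(lia)).
       2: { apply invmod_spec; auto. apply unit_mul; tauto. }
       replace (- (f * u * p1)) with ((- (u * p1)) * f) by ring. rewrite E_scale by lia. reflexivity. }
  destruct (andb (Z.eqb (p2 mod f) 0) (Z.eqb (p3 mod f) 0)) eqn:Hc.
  - apply Bool.andb_true_iff in Hc. destruct Hc as [H2 H3]. apply Z.eqb_eq in H2, H3.
    apply Z.mod_divide in H2, H3; try lia.
    assert (Hd : (f | gcd3 p2 p3 k)).
    { unfold gcd3. apply Z.gcd_greatest. apply Z.gcd_greatest; auto. apply Z.mod_divide; auto; lia. }
    specialize (Habar f ltac:(lia) Hd). fold a in Habar.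
    rewrite Cscale_mult.
    rewrite (Csum_ext _ _ (fun u => Cmult (RtoC (IZR f)) (Cmult (E (- (u * p1)) a)
                  (E (- ((p2 / f) * (p3 / f) * invmod (alpha * u) a)) a)))).
    2: { intros u _. apply cring_aux. ring. }
    rewrite <- Csum_mult_l. f_equal.
    assert (HP : p2 * p3 / (f * f) = (p2 / f) * (p3 / f)).
    { destruct H2 as [s Hs], H3 as [t Ht]. subst p2 p3. rewrite !Z.div_mul by lia.
      replace (s * f * (t * f)) with ((s * t) * (f * f)) by ring. apply Z.div_mul. nia. }
    rewrite HP. apply stepE; auto.
  - apply Csum_zero. intros u _. apply cring_aux. rewrite C0_RtoC. ring.
Qed.

Open Scope R_scope.

Theorem mainTheorem9 (k alpha p1 p2 p3 : Z) (abar : Z -> Z) :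
  (1 <= k)%Z ->
  Z.gcd alpha k = 1%Z ->
  (forall f : Z, (0 < f)%Z -> (f | gcd3 p2 p3 k)%Z ->
     ((alpha * abar f) mod (k / f) = 1 mod (k / f))%Z) ->
  A p1 p2 p3 alpha k =
  Cscale (IZR k)
    (Csum (pos_divisors (gcd3 p2 p3 k))
       (fun f => Cscale (IZR f) (S (p1 * abar f) (p2 * p3 / (f * f)) (k / f)))).
Proof. exact (main_aux k alpha p1 p2 p3 abar). Qed.
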